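(* There exists a set of $510$ unit vectors in $\mathbb{R}^{10}$ such that the inner product of any two distinct vectors lies in $\{0,\pm\tfrac16,\pm\tfrac14,\pm\tfrac13,\pm\tfrac12,-1\}$. In particular the kissing number in dimension $10$ is at least $510$.
   Context: The kissing number in dimension $d$ is the maximal number of unit vectors in $\mathbb{R}^d$ with pairwise inner products at most $1/2$. *)

(* Defs.v *)
From HB Require Import structures.
From mathcomp Require Import all_boot all_order all_algebra.
From mathcomp Require Import reals.
Set Implicit Arguments. Unset Strict Implicit. Unset Printing Implicit Defensive.
Import Order.TTheory GRing.Theory Num.Theory.
Local Open Scope ring_scope.

Definition dotp (R : realType) (n : nat) (u v : 'rV[R]_n) : R :=
  \sum_(k < n) u 0 k * v 0 k.

Definition allowed_ips (R : realType) : seq R :=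
  [:: 0; 1/6; -(1/6); 1/4; -(1/4); 1/3; -(1/3); 1/2; -(1/2); -1].

Definition kissing_config (R : realType) (n N : nat) (v : 'I_N -> 'rV[R]_n) : Prop :=
  (forall i, dotp (v i) (v i) = 1) /\
  (forall i j, i != j -> dotp (v i) (v j) <= 1/2).

Definition kissing_number_ge (R : realType) (n N : nat) : Prop :=
  exists v : 'I_N -> 'rV[R]_n, kissing_config v.

(* Main.v *)
Require Import Defs.
From HB Require Import structures.
From mathcomp Require Import all_boot all_order all_algebra.
From mathcomp Require Import reals.
From Stdlib Require Import ZArith.
From mathcomp Require Import ssrZ.
From mathcomp Require Import ring lra.
Import Order.TTheory GRing.Theory Num.Theory.
Import ssrZ.Instances.
Local Open Scope ring_scope.

Local Open Scope Z_scope.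
Definition ew : seq Z := [:: 32; 32; 32; 32; 32; 32; 24; 4; 8; 1].
Definition data : seq (seq Z) := [::
[:: 0; 3; (-3); 3; 0; (-3); 3; 9; (-18); 18];
[:: 6; 0; (-3); 6; 3; 3; 0; 12; (-6); 24];
[:: 0; 3; 3; 0; 6; 3; 0; 18; (-12); 12];
[:: 0; 0; (-6); 0; 0; 0; 6; 18; 0; 36];
[:: 6; 0; (-3); (-6); 3; 3; 0; 12; (-6); 24];
[:: 0; 6; (-3); (-3); 6; 0; 6; 0; (-6); 24];
[:: 0; 3; (-3); (-3); 0; (-3); (-3); 27; (-6); 6];
[:: 6; 6; (-6); 0; 3; (-3); (-3); 3; (-6); 6];
[:: 0; 6; (-3); 3; 6; 0; 0; 18; 6; 12];
[:: 0; 0; (-3); 6; (-3); 3; 6; 18; (-6); (-12)];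
[:: 6; 0; 0; 0; 0; 6; 0; 12; (-12); (-24)];
[:: 0; 6; 0; 3; 3; 3; 6; 0; (-12); (-24)];
[:: 0; 0; (-3); (-6); (-3); 3; 6; 18; (-6); (-12)];
[:: 6; 3; (-6); (-3); 0; 3; 6; (-6); (-6); (-12)];
[:: 0; 3; (-3); 0; 3; 6; 9; 9; 6; (-6)];
[:: 0; 6; (-6); 0; (-3); (-3); 3; 9; (-6); (-30)];
[:: 6; 3; (-6); 3; 0; 3; 0; 12; 6; (-24)];
[:: 0; 6; 0; (-3); 3; 3; 0; 18; 0; (-36)];
[:: 0; 3; 3; 0; (-6); 3; 0; 18; (-12); 12];
[:: 6; 6; 0; 3; (-3); 3; 0; (-6); (-12); 12];
[:: 0; 6; 3; 6; 0; 6; 3; 9; 0; 18];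
[:: 0; 6; (-3); (-3); (-6); 0; 6; 0; (-6); 24];
[:: 6; 3; (-3); 0; (-3); 6; 3; 3; 6; 30];
[:: 0; 6; 3; (-6); 0; 6; 3; 9; 0; 18];
[:: 0; 6; (-3); 3; (-6); 0; 0; 18; 6; 12];
[:: 6; 6; 0; (-3); (-3); 3; (-6); 12; 0; 0];
[:: 0; 12; 0; 0; 0; 0; 0; 0; 0; 0];
[:: 0; (-3); (-6); (-3); 0; 3; 0; 0; (-18); 0];
[:: (-6); (-3); (-3); 0; 3; 6; 3; 15; (-6); 6];
[:: 0; 0; (-6); 3; 6; 6; 3; (-9); (-6); 6];
[:: 0; (-3); (-6); 3; 0; 3; (-6); 18; (-6); (-12)];
[:: (-6); 3; (-6); 6; 3; 0; 0; 6; (-6); (-12)];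
[:: 0; 3; (-3); 0; 6; 3; (-6); 0; (-12); (-24)];
[:: 0; 0; (-12); 0; 0; 0; 0; 0; 0; 0];
[:: (-6); 3; (-6); (-6); 3; 0; 0; 6; (-6); (-12)];
[:: 0; 0; (-6); (-3); 6; 6; (-3); 9; 6; (-6)];
[:: 0; (-3); (-3); 0; (-3); 6; (-3); 9; (-6); 42];
[:: (-6); 3; (-3); 3; 0; 3; 3; (-3); (-6); 42];
[:: 0; 3; 0; (-3); 3; 6; (-3); (-9); (-12); 30];
[:: 0; 3; (-6); 6; (-3); 0; (-6); 0; (-6); 24];
[:: (-6); 6; 0; 0; 0; 0; (-6); 6; (-12); 12];
[:: 0; 3; 0; 3; 3; 6; (-9); 9; 0; 18];
[:: 0; 3; (-6); (-6); (-3); 0; (-6); 0; (-6); 24];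
[:: (-6); 3; (-3); (-3); 0; 3; (-3); 15; 6; 30];
[:: 0; 6; (-6); 0; 3; 3; (-3); (-9); 6; 30];
[:: 0; 0; (-6); 3; (-6); 6; 3; (-9); (-6); 6];
[:: (-6); 3; 0; (-3); (-3); 6; 3; (-3); (-12); (-6)];
[:: 0; 0; 0; 0; 0; 12; 0; 0; 0; 0];
[:: 0; 3; (-3); 0; (-6); 3; (-6); 0; (-12); (-24)];
[:: (-6); 3; 0; 3; (-3); 6; (-3); 15; 0; (-18)];
[:: 0; 6; (-3); 6; 0; 6; (-3); (-9); 0; (-18)];
[:: 0; 0; (-6); (-3); (-6); 6; (-3); 9; 6; (-6)];
[:: (-6); 6; (-6); 0; (-3); 3; 3; (-3); 6; (-6)];
[:: 0; 6; (-3); (-6); 0; 6; (-3); (-9); 0; (-18)];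
[:: 6; (-3); (-3); 3; 0; (-3); 9; 3; (-6); 6];
[:: 0; 0; 3; (-3); 3; (-3); 9; 9; (-12); (-6)];
[:: 6; (-3); 3; 0; 6; 3; 6; 12; 0; 0];
[:: 6; 0; 0; 0; 0; (-6); 0; 12; (-12); (-24)];
[:: 0; 0; 3; 3; 3; (-3); 3; 27; 0; (-18)];
[:: 6; 3; 0; 6; 6; (-3); 3; 3; 0; (-18)];
[:: 6; (-3); (-3); (-3); 0; (-3); 3; 21; 6; (-6)];
[:: 0; 3; (-3); 0; 3; (-6); 9; 9; 6; (-6)];
[:: 6; 3; 0; (-6); 6; (-3); 3; 3; 0; (-18)];
[:: 6; 0; 3; (-3); (-3); (-3); 3; 3; (-12); 30];
[:: 0; 0; 6; 0; 0; 0; 6; 18; 0; 36];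
[:: 6; 3; 3; 3; 3; 0; 6; (-6); 0; 36];
[:: 6; 0; 3; 3; (-3); (-3); (-3); 21; 0; 18];
[:: 0; 6; 3; 6; 0; (-6); 3; 9; 0; 18];
[:: 6; 6; 6; 0; 3; (-3); (-3); 3; (-6); 6];
[:: 6; 3; (-3); 0; (-3); (-6); 3; 3; 6; 30];
[:: 0; 6; 3; (-6); 0; (-6); 3; 9; 0; 18];
[:: 6; 3; 3; (-3); 3; 0; 0; 12; 12; 24];
[:: 6; (-3); 3; 0; (-6); 3; 6; 12; 0; 0];
[:: 0; 3; 3; 3; (-3); 0; 12; 0; 0; 0];
[:: 6; 3; 6; (-3); 0; 3; 6; (-6); (-6); (-12)];
[:: 6; 3; 0; 6; (-6); (-3); 3; 3; 0; (-18)];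
[:: 0; 6; 6; 0; (-3); (-3); 3; 9; (-6); (-30)];
[:: 6; 3; 6; 3; 0; 3; 0; 12; 6; (-24)];
[:: 6; 3; 0; (-6); (-6); (-3); 3; 3; 0; (-18)];
[:: 0; 3; 3; (-3); (-3); 0; 6; 18; 12; (-12)];
[:: 6; 6; 0; 0; 0; 0; 6; (-6); 12; (-12)];
[:: 0; (-3); 0; 6; 6; (-3); (-3); 9; (-12); (-6)];
[:: 0; (-6); (-3); (-3); 6; 0; 6; 0; (-6); 24];
[:: (-6); (-3); (-3); 0; 3; (-6); 3; 15; (-6); 6];
[:: 6; (-6); (-6); 0; 3; (-3); (-3); 3; (-6); 6];
[:: 0; (-3); 0; (-6); 6; (-3); (-3); 9; (-12); (-6)];
[:: 0; (-6); (-3); 3; 6; 0; 0; 18; 6; 12];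
[:: 0; 0; (-6); 3; 6; (-6); 3; (-9); (-6); 6];
[:: 0; 0; 0; 0; 12; 0; 0; 0; 0; 0];
[:: 0; 0; (-6); (-3); 6; (-6); (-3); 9; 6; (-6)];
[:: 0; (-3); 3; 3; 3; 0; 0; 0; (-12); 48];
[:: 0; (-3); (-3); 0; (-3); (-6); (-3); 9; (-6); 42];
[:: 0; (-3); 3; (-3); 3; 0; (-6); 18; 0; 36];
[:: 0; 3; 0; (-3); 3; (-6); (-3); (-9); (-12); 30];
[:: 0; 0; (-3); 6; 3; (-3); 0; 0; 6; 48];
[:: (-6); 3; 3; 0; 6; (-3); 0; 6; 0; 36];
[:: 6; 0; 0; 0; 6; 0; (-6); (-6); 0; 36];
[:: 0; 3; 0; 3; 3; (-6); (-9); 9; 0; 18];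
[:: 0; 0; (-3); (-6); 3; (-3); 0; 0; 6; 48];
[:: 0; (-6); 0; 3; 3; 3; 6; 0; (-12); (-24)];
[:: 0; (-6); (-6); 0; (-3); (-3); 3; 9; (-6); (-30)];
[:: 0; (-6); 0; (-3); 3; 3; 0; 18; 0; (-36)];
[:: 0; 0; (-3); (-3); 3; (-3); 3; (-9); (-12); (-42)];
[:: 0; (-3); (-6); 6; 3; 0; 6; 0; 6; (-24)];
[:: (-6); 0; 0; 0; 6; 0; 6; 6; 0; (-36)];
[:: 6; (-3); (-3); 0; 6; 3; 0; (-6); 0; (-36)];
[:: 0; 0; (-3); 3; 3; (-3); (-3); 9; 0; (-54)];
[:: 0; (-3); (-6); (-6); 3; 0; 6; 0; 6; (-24)];
[:: (-6); (-3); 3; 3; (-3); 0; 6; 6; (-12); 12];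
[:: 6; (-6); 0; 3; (-3); 3; 0; (-6); (-12); 12];
[:: 0; (-3); 6; (-3); 0; 3; 0; 0; (-18); 0];
[:: 0; (-6); 3; 6; 0; 6; 3; 9; 0; 18];
[:: 0; 0; 0; 6; 0; 0; 6; (-18); (-12); 12];
[:: 0; 0; 6; 3; 6; 6; 3; (-9); (-6); 6];
[:: 0; (-3); 0; 6; (-6); (-3); (-3); 9; (-12); (-6)];
[:: 0; (-3); 6; 3; 0; 3; (-6); 18; (-6); (-12)];
[:: 0; 3; 3; 3; 0; (-3); (-3); (-9); (-18); (-18)];
[:: 0; 0; 0; 12; 0; 0; 0; 0; 0; 0];
[:: (-6); 3; 6; 6; 3; 0; 0; 6; (-6); (-12)];
[:: 6; 0; 3; 6; 3; 3; (-6); (-6); (-6); (-12)];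
[:: 0; (-6); (-3); (-3); (-6); 0; 6; 0; (-6); 24];
[:: 0; (-6); 3; (-6); 0; 6; 3; 9; 0; 18];
[:: 0; 0; 0; (-6); 0; 0; 6; (-18); (-12); 12];
[:: 0; (-3); (-3); 3; 0; 3; 9; (-9); 6; 30];
[:: (-6); 0; 3; (-3); 3; 3; 9; (-3); 0; 18];
[:: 6; (-3); 0; (-3); 3; 6; 3; (-15); 0; 18];
[:: 0; (-3); 0; (-6); (-6); (-3); (-3); 9; (-12); (-6)];
[:: 0; (-6); (-3); 3; (-6); 0; 0; 18; 6; 12];
[:: 0; 0; (-6); 3; (-6); (-6); 3; (-9); (-6); 6];
[:: (-6); (-3); 3; (-3); (-3); 0; 0; 24; 0; 0];
[:: (-6); 3; 0; (-3); (-3); (-6); 3; (-3); (-12); (-6)];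
[:: (-6); 0; (-3); 6; (-3); (-3); 6; 6; 6; 12];
[:: 6; (-6); 0; (-3); (-3); 3; (-6); 12; 0; 0];
[:: 6; 0; (-3); (-3); (-3); (-3); (-3); (-15); (-12); (-6)];
[:: 6; (-3); (-6); 6; (-3); 0; 0; (-6); 6; 12];
[:: (-6); 3; 6; (-6); 3; 0; 0; 6; (-6); (-12)];
[:: (-6); 0; 3; 3; 3; 3; 3; 15; 12; 6];
[:: (-6); 6; 0; 3; 3; (-3); 6; (-12); 0; 0];
[:: 6; 0; 3; (-6); 3; 3; (-6); (-6); (-6); (-12)];
[:: 6; (-3); 0; 3; 3; 6; (-3); 3; 12; 6];
[:: 6; 3; (-3); 3; 3; 0; 0; (-24); 0; 0];
[:: 0; 0; 6; (-3); 6; 6; (-3); 9; 6; (-6)];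
[:: 0; 6; 3; (-3); 6; 0; 0; (-18); (-6); (-12)];
[:: 0; 3; 0; 6; 6; 3; 3; (-9); 12; 6];
[:: (-6); 3; 0; 3; (-3); (-6); (-3); 15; 0; (-18)];
[:: 6; 0; (-3); 3; (-3); (-3); (-9); 3; 0; (-18)];
[:: 0; 3; 3; (-3); 0; (-3); (-9); 9; (-6); (-30)];
[:: 0; 0; 0; 6; 0; 0; (-6); 18; 12; (-12)];
[:: 0; 6; (-3); 6; 0; (-6); (-3); (-9); 0; (-18)];
[:: 0; 6; 3; 3; 6; 0; (-6); 0; 6; (-24)];
[:: (-6); 0; (-3); (-6); (-3); (-3); 6; 6; 6; 12];
[:: 6; (-3); (-6); (-6); (-3); 0; 0; (-6); 6; 12];
[:: 0; 0; 0; (-12); 0; 0; 0; 0; 0; 0];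
[:: 0; (-3); (-3); (-3); 0; 3; 3; 9; 18; 18];
[:: 0; 3; (-6); (-3); 0; (-3); 6; (-18); 6; 12];
[:: 0; 3; 0; (-6); 6; 3; 3; (-9); 12; 6];
[:: 0; 0; (-6); (-3); (-6); (-6); (-3); 9; 6; (-6)];
[:: 0; 0; 0; (-6); 0; 0; (-6); 18; 12; (-12)];
[:: 0; 6; (-3); (-6); 0; (-6); (-3); (-9); 0; (-18)];
[:: 0; 3; (-6); 3; 0; (-3); 0; 0; 18; 0];
[:: (-6); 6; 0; (-3); 3; (-3); 0; 6; 12; (-12)];
[:: 6; 3; (-3); (-3); 3; 0; (-6); (-6); 12; (-12)];
[:: 0; 3; 6; 6; (-3); 0; (-6); 0; (-6); 24];
[:: 0; 0; 3; (-3); (-3); 3; 3; (-9); 0; 54];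
[:: (-6); 3; 3; 0; (-6); (-3); 0; 6; 0; 36];
[:: 6; 0; 0; 0; (-6); 0; (-6); (-6); 0; 36];
[:: 0; 3; 6; (-6); (-3); 0; (-6); 0; (-6); 24];
[:: 0; 0; 3; 3; (-3); 3; (-3); 9; 12; 42];
[:: 0; 6; 0; 3; (-3); (-3); 0; (-18); 0; 36];
[:: 0; 6; 6; 0; 3; 3; (-3); (-9); 6; 30];
[:: 0; 6; 0; (-3); (-3); (-3); (-6); 0; 12; 24];
[:: 0; 0; 3; 6; (-3); 3; 0; 0; (-6); (-48)];
[:: 0; (-3); 0; (-3); (-3); 6; 9; (-9); 0; (-18)];
[:: (-6); 0; 0; 0; (-6); 0; 6; 6; 0; (-36)];
[:: 6; (-3); (-3); 0; (-6); 3; 0; (-6); 0; (-36)];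
[:: 0; 0; 3; (-6); (-3); 3; 0; 0; (-6); (-48)];
[:: 0; (-3); 0; 3; (-3); 6; 3; 9; 12; (-30)];
[:: 0; 3; (-3); 3; (-3); 0; 6; (-18); 0; (-36)];
[:: 0; 3; 3; 0; 3; 6; 3; (-9); 6; (-42)];
[:: 0; 3; (-3); (-3); (-3); 0; 0; 0; 12; (-48)];
[:: 0; 0; 6; 3; (-6); 6; 3; (-9); (-6); 6];
[:: 0; 0; 0; 0; (-12); 0; 0; 0; 0; 0];
[:: 0; 0; 6; (-3); (-6); 6; (-3); 9; 6; (-6)];
[:: 0; 6; 3; (-3); (-6); 0; 0; (-18); (-6); (-12)];
[:: 0; 3; 0; 6; (-6); 3; 3; (-9); 12; 6];
[:: (-6); 6; 6; 0; (-3); 3; 3; (-3); 6; (-6)];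
[:: 6; 3; 3; 0; (-3); 6; (-3); (-15); 6; (-6)];
[:: 0; 6; 3; 3; (-6); 0; (-6); 0; 6; (-24)];
[:: 0; 3; 0; (-6); (-6); 3; 3; (-9); 12; 6];
[:: (-6); (-6); 0; 0; 0; 0; (-6); 6; (-12); 12];
[:: 0; (-3); (-3); 3; 3; 0; (-6); (-18); (-12); 12];
[:: (-6); (-3); 0; 6; 6; 3; (-3); (-3); 0; 18];
[:: (-6); (-3); (-6); (-3); 0; (-3); 0; (-12); (-6); 24];
[:: 0; (-6); (-6); 0; 3; 3; (-3); (-9); 6; 30];
[:: (-6); (-3); 0; (-6); 6; 3; (-3); (-3); 0; 18];
[:: (-6); (-3); (-6); 3; 0; (-3); (-6); 6; 6; 12];
[:: 0; (-3); (-3); (-3); 3; 0; (-12); 0; 0; 0];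
[:: (-6); 3; (-3); 0; 6; (-3); (-6); (-12); 0; 0];
[:: (-6); (-3); (-3); 3; (-3); 0; 0; (-12); (-12); (-24)];
[:: 0; (-6); (-3); 6; 0; 6; (-3); (-9); 0; (-18)];
[:: (-6); (-3); 3; 0; 3; 6; (-3); (-3); (-6); (-30)];
[:: (-6); (-6); (-6); 0; (-3); 3; 3; (-3); 6; (-6)];
[:: 0; (-6); (-3); (-6); 0; 6; (-3); (-9); 0; (-18)];
[:: (-6); 0; (-3); (-3); 3; 3; 3; (-21); 0; (-18)];
[:: (-6); (-3); (-3); (-3); (-3); 0; (-6); 6; 0; (-36)];
[:: 0; 0; (-6); 0; 0; 0; (-6); (-18); 0; (-36)];
[:: (-6); 0; (-3); 3; 3; 3; (-3); (-3); 12; (-30)];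
[:: (-6); (-3); 0; 6; (-6); 3; (-3); (-3); 0; 18];
[:: 0; (-3); 3; 0; (-3); 6; (-9); (-9); (-6); 6];
[:: (-6); 3; 3; 3; 0; 3; (-3); (-21); (-6); 6];
[:: (-6); (-3); 0; (-6); (-6); 3; (-3); (-3); 0; 18];
[:: 0; 0; (-3); (-3); (-3); 3; (-3); (-27); 0; 18];
[:: (-6); 0; 0; 0; 0; 6; 0; (-12); 12; 24];
[:: (-6); 3; (-3); 0; (-6); (-3); (-6); (-12); 0; 0];
[:: 0; 0; (-3); 3; (-3); 3; (-9); (-9); 12; 6];
[:: (-6); 3; 3; (-3); 0; 3; (-9); (-3); 6; (-6)];
[:: 0; (-6); 3; 6; 0; (-6); 3; 9; 0; 18];
[:: 6; (-6); 6; 0; 3; (-3); (-3); 3; (-6); 6];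
[:: 0; 0; 6; 3; 6; (-6); 3; (-9); (-6); 6];
[:: 0; (-6); 3; (-6); 0; (-6); 3; 9; 0; 18];
[:: 6; (-3); 0; (-3); 3; (-6); 3; (-15); 0; 18];
[:: 0; (-3); 3; 0; 6; (-3); 6; 0; 12; 24];
[:: 0; 0; 0; 0; 0; (-12); 0; 0; 0; 0];
[:: 6; (-3); 0; 3; 3; (-6); (-3); 3; 12; 6];
[:: 0; 0; 6; (-3); 6; (-6); (-3); 9; 6; (-6)];
[:: 0; (-6); 6; 0; (-3); (-3); 3; 9; (-6); (-30)];
[:: 6; (-3); 3; 3; 0; (-3); 3; (-15); (-6); (-30)];
[:: 0; (-3); 6; 6; 3; 0; 6; 0; 6; (-24)];
[:: 0; (-3); 0; (-3); (-3); (-6); 9; (-9); 0; (-18)];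
[:: 6; (-6); 0; 0; 0; 0; 6; (-6); 12; (-12)];
[:: 0; (-3); 6; (-6); 3; 0; 6; 0; 6; (-24)];
[:: 0; (-3); 0; 3; (-3); (-6); 3; 9; 12; (-30)];
[:: 6; (-3); 3; (-3); 0; (-3); (-3); 3; 6; (-42)];
[:: 0; 3; 3; 0; 3; (-6); 3; (-9); 6; (-42)];
[:: 0; 0; 6; 3; (-6); (-6); 3; (-9); (-6); 6];
[:: 6; (-3); 6; 6; (-3); 0; 0; (-6); 6; 12];
[:: 0; 0; 12; 0; 0; 0; 0; 0; 0; 0];
[:: 0; (-3); 3; 0; (-6); (-3); 6; 0; 12; 24];
[:: 6; (-3); 6; (-6); (-3); 0; 0; (-6); 6; 12];
[:: 0; 3; 6; (-3); 0; (-3); 6; (-18); 6; 12];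
[:: 0; 0; 6; (-3); (-6); (-6); (-3); 9; 6; (-6)];
[:: 6; 3; 3; 0; (-3); (-6); (-3); (-15); 6; (-6)];
[:: 0; 3; 6; 3; 0; (-3); 0; 0; 18; 0];
[:: 0; (-12); 0; 0; 0; 0; 0; 0; 0; 0];
[:: (-6); (-6); 0; 3; 3; (-3); 6; (-12); 0; 0];
[:: 0; (-6); 3; (-3); 6; 0; 0; (-18); (-6); (-12)];
[:: 0; (-6); (-3); 6; 0; (-6); (-3); (-9); 0; (-18)];
[:: (-6); (-3); 3; 0; 3; (-6); (-3); (-3); (-6); (-30)];
[:: 0; (-6); 3; 3; 6; 0; (-6); 0; 6; (-24)];
[:: 0; (-6); (-3); (-6); 0; (-6); (-3); (-9); 0; (-18)];
[:: (-6); (-6); 0; (-3); 3; (-3); 0; 6; 12; (-12)];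
[:: 0; (-3); (-3); 0; 6; (-3); 0; (-18); 12; (-12)];
[:: 0; (-6); 0; 3; (-3); (-3); 0; (-18); 0; 36];
[:: (-6); (-3); 6; (-3); 0; (-3); 0; (-12); (-6); 24];
[:: 0; (-6); 6; 0; 3; 3; (-3); (-9); 6; 30];
[:: 0; (-3); 3; 0; (-3); (-6); (-9); (-9); (-6); 6];
[:: (-6); (-3); 6; 3; 0; (-3); (-6); 6; 6; 12];
[:: 0; 0; 3; 6; 3; (-3); (-6); (-18); 6; 12];
[:: 0; (-6); 0; (-3); (-3); (-3); (-6); 0; 12; 24];
[:: (-6); 0; 0; 0; 0; (-6); 0; (-12); 12; 24];
[:: 0; 0; 3; (-6); 3; (-3); (-6); (-18); 6; 12];
[:: 0; (-6); 3; (-3); (-6); 0; 0; (-18); (-6); (-12)];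
[:: (-6); (-6); 6; 0; (-3); 3; 3; (-3); 6; (-6)];
[:: 0; (-3); 3; 3; 0; 3; 3; (-27); 6; (-6)];
[:: 0; (-6); 3; 3; (-6); 0; (-6); 0; 6; (-24)];
[:: (-6); 0; 3; 6; (-3); (-3); 0; (-12); 6; (-24)];
[:: 0; 0; 6; 0; 0; 0; (-6); (-18); 0; (-36)];
[:: 0; (-3); (-3); 0; (-6); (-3); 0; (-18); 12; (-12)];
[:: (-6); 0; 3; (-6); (-3); (-3); 0; (-12); 6; (-24)];
[:: 0; (-3); 3; (-3); 0; 3; (-3); (-9); 18; (-18)];
[:: (-4); 0; 6; (-6); 0; 0; 0; 4; 12; 24];
[:: 2; 6; 0; (-6); 0; 0; 0; 4; (-16); (-8)];
[:: 0; 0; 0; 0; 6; 6; (-6); (-18); 4; (-4)];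
[:: (-6); 6; 0; 0; 6; 6; 0; 0; 0; 0];
[:: 6; 0; (-6); 0; 6; 0; 4; 0; 8; 16];
[:: 2; 6; (-6); 6; 0; 0; 6; (-2); 0; 12];
[:: 0; (-6); 0; 0; 0; (-6); (-6); 18; 0; (-12)];
[:: 4; 0; (-6); 0; 0; 0; 2; (-10); (-8); 44];
[:: 2; 0; 0; 0; 0; 6; 8; 4; (-12); 24];
[:: (-2); 0; 0; 0; (-6); 0; (-2); (-10); (-16); 28];
[:: (-6); 0; (-6); 0; (-6); 0; 0; 12; (-8); 8];
[:: 4; (-6); 0; (-6); 6; 0; (-2); 2; 8; 4];
[:: (-2); (-6); 6; (-6); 0; 0; (-6); 2; 0; (-12)];
[:: (-2); 0; (-6); 6; 0; 6; 0; 8; 8; 16];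
[:: (-2); 0; 0; (-6); 0; 6; (-6); 14; (-8); (-4)];
[:: 6; 0; (-6); 0; (-6); 0; 0; 12; (-8); 8];
[:: 2; 0; 0; (-6); (-6); 0; 0; 16; 4; 32];
[:: (-4); 0; 0; (-6); 0; 0; (-6); (-14); (-12); (-12)];
[:: 6; 0; 0; (-6); 0; 6; 2; 6; 8; (-20)];
[:: 0; (-6); 6; 0; (-6); 0; (-2); 6; (-4); 28];
[:: (-2); 0; 6; 0; 6; 0; (-8); (-4); (-8); 8];
[:: 6; 6; 0; 6; 0; 0; (-4); 0; 8; 16];
[:: 6; 6; 0; 0; 0; 0; (-2); (-6); (-4); (-44)];
[:: (-4); 0; (-6); 6; 0; 0; 0; (-20); 4; 8];
[:: 6; (-6); 0; 0; 0; 0; 2; 6; 4; 44];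
[:: (-2); (-6); 0; 0; 6; (-6); (-4); (-4); 0; 24];
[:: (-6); 0; (-6); 0; 6; 0; 4; 0; 8; 16];
[:: (-2); 6; (-6); 0; 0; 0; 0; (-16); (-12); 0];
[:: 0; 6; 0; (-6); 6; 0; (-6); 6; 0; 12];
[:: (-4); 0; 0; (-6); 6; (-6); 4; (-8); 0; 0];
[:: 2; 0; 0; 0; 0; 6; 0; (-20); (-12); (-24)];
[:: 4; 6; 6; 0; (-6); 0; 2; 2; 4; 20];
[:: 2; 6; 0; 0; (-6); (-6); (-4); 4; (-8); 8];
[:: 4; 0; (-6); 0; 0; 0; (-6); 14; 8; 28];
[:: (-4); 0; 6; 0; 0; 0; (-2); 10; 8; (-44)];
[:: 2; 6; 0; 0; 0; 0; (-10); (-14); (-4); 4];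
[:: 2; 0; 0; (-6); (-6); 0; (-8); (-8); 4; (-16)];
[:: (-2); 6; 0; (-6); 0; 0; 8; (-4); 0; (-24)];
[:: (-2); 6; 0; 0; 0; 0; (-2); (-22); 12; (-12)];
[:: 6; 6; 0; 0; 6; 6; 0; 0; 0; 0];
[:: (-6); 6; 0; 0; 0; 0; (-2); (-6); (-4); (-44)];
[:: 0; (-6); 0; (-6); (-6); 0; 2; 6; 8; (-20)];
[:: 2; 0; 0; (-6); 0; (-6); 2; (-2); 16; (-4)];
[:: (-4); 0; 0; 0; (-6); 6; 6; 10; 4; 20];
[:: 0; 0; 0; 0; (-6); (-6); (-2); (-6); (-4); (-44)];
[:: 0; 6; 0; 6; 6; 0; (-2); (-6); (-8); 20];
[:: 6; 0; 0; 6; 0; (-6); (-2); (-6); (-8); 20];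
[:: 4; 0; (-6); (-6); 0; 0; (-4); 8; (-4); (-32)];
[:: (-2); 0; 0; 0; 6; 0; 2; (-22); 0; 36];
[:: 6; 0; (-6); 0; 0; 6; (-6); (-6); (-4); 4];
[:: 2; 6; 6; 6; 0; 0; 2; (-14); 0; (-12)];
[:: 4; 0; 0; (-6); 0; 0; 2; (-22); 4; (-28)];
[:: 2; 0; 6; 0; (-6); 0; 4; (-8); 8; (-32)];
[:: (-2); 0; 6; (-6); (-6); 0; 6; 2; (-4); 4];
[:: (-2); 0; 6; 6; 0; 6; (-4); (-4); 8; (-8)];
[:: (-6); 0; 6; 0; 6; 0; 0; (-12); 8; (-8)];
[:: (-6); 0; 6; 0; 0; 6; (-2); 6; (-4); 28];
[:: 4; 6; (-6); 0; (-6); 0; (-2); (-10); 4; (-4)];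
[:: (-2); (-6); 0; 6; 0; 0; 0; (-4); 16; 8];
[:: 2; 0; 6; 6; 6; 0; (-2); 10; 4; 20];
[:: (-4); 6; 0; 6; (-6); 0; 2; (-2); (-8); (-4)];
[:: (-2); (-6); (-6); 6; 0; 0; 2; 2; (-8); 20];
[:: (-6); 0; 0; 0; (-6); 0; 6; (-18); 0; 12];
[:: 0; 0; 0; (-6); 6; 6; 4; 0; (-8); (-16)];
[:: (-6); (-6); 0; 6; 0; 0; 0; 12; 0; (-24)];
[:: (-2); 0; 0; 0; 0; (-6); (-8); (-4); 12; (-24)];
[:: (-12); 0; 0; 0; 0; 0; 0; 0; 0; 0];
[:: (-4); 0; 0; 6; 0; 0; (-10); (-2); (-4); (-20)];
[:: (-4); (-6); 0; 0; 0; 6; (-6); 10; 8; 4];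
[:: (-6); 0; 0; 0; 6; 0; (-6); 18; 0; (-12)];
[:: (-2); 0; 0; 0; 0; (-6); 0; (-28); (-4); (-8)];
[:: (-2); 0; (-6); (-6); 0; 6; 4; (-4); 0; 24];
[:: 6; (-6); 0; 6; 0; 0; 0; 12; 0; (-24)];
[:: (-2); 0; 0; (-6); 6; 0; (-4); (-4); 4; (-40)];
[:: 0; (-6); 6; 0; 0; (-6); 0; (-12); 8; (-8)];
[:: 4; (-6); (-6); 0; 0; 6; 4; 8; 0; 0];
[:: 2; 0; (-6); (-6); 6; 0; (-2); (-14); (-4); 4];
[:: (-4); 0; 0; 6; 6; (-6); 0; 4; 8; (-8)];
[:: 4; 0; 6; 0; 0; 0; (-10); 2; 8; 4];
[:: 0; 0; 0; 0; (-6); (-6); 6; 18; (-4); 4];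
[:: 2; 0; 0; (-6); 0; 6; (-6); (-2); 8; 28];
[:: 0; 6; 0; 0; 0; 6; (-2); 6; 16; (-4)];
[:: 2; 0; 0; 0; 0; 6; (-8); 4; 4; (-40)];
[:: (-2); 0; 6; 0; 0; (-6); (-2); 14; (-12); 12];
[:: (-6); 0; 6; 0; 0; (-6); 6; 6; 4; (-4)];
[:: (-2); 6; 0; 0; 0; 0; 6; 2; 12; 36];
[:: 2; 0; 6; 6; 0; (-6); (-4); 4; 0; (-24)];
[:: 2; (-6); 0; 6; 0; 0; (-8); 4; 0; 24];
[:: 2; (-6); (-6); 0; 0; 0; 4; (-20); (-4); (-8)];
[:: 6; (-6); 0; 0; 0; 0; (-6); (-18); 4; (-4)];
[:: (-4); 0; 0; 0; 0; 0; (-8); (-8); 0; 48];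
[:: (-4); 0; 6; 6; 0; 0; 4; (-8); 4; 32];
[:: 2; 0; 0; 6; (-6); 0; (-4); (-20); (-4); (-8)];
[:: 4; 0; 0; (-6); (-6); 6; 0; (-4); (-8); 8];
[:: 2; 6; 6; (-6); 0; 0; (-2); (-2); 8; (-20)];
[:: (-6); 0; 0; (-6); 0; 6; 2; 6; 8; (-20)];
[:: 4; 0; 0; 6; 0; 0; (-2); (-10); 12; (-36)];
[:: (-6); (-6); 0; 0; 0; 0; (-6); (-18); 4; (-4)];
[:: (-4); 6; 6; 0; 0; (-6); (-4); (-8); 0; 0];
[:: (-4); 6; 0; (-6); (-6); 0; (-2); 10; 0; (-12)];
[:: 2; 0; (-6); 6; 0; (-6); 0; 16; 0; 0];
[:: 6; 0; (-6); 0; 0; (-6); 2; (-6); 4; (-28)];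
[:: 0; 6; (-6); 0; 6; 0; 2; (-6); 4; (-28)];
[:: (-6); 6; 0; (-6); 0; 0; 0; (-12); 0; 24];
[:: (-4); 0; 0; 6; 0; 0; (-2); 22; (-4); 28];
[:: 4; (-6); 6; 0; 0; 6; 0; (-4); 0; (-24)];
[:: 6; 0; 0; 0; (-6); 0; (-2); 6; 16; (-4)];
[:: (-2); 0; 0; 0; 0; (-6); 0; 20; 12; 24];
[:: (-6); (-6); 0; 0; 0; 0; 2; 6; 4; 44];
[:: (-2); 0; 6; 6; (-6); 0; 2; 14; 4; (-4)];
[:: 6; 6; 0; 0; 0; 0; 6; 18; (-4); 4];
[:: (-2); 0; (-6); (-6); (-6); 0; 2; (-10); (-4); (-20)];
[:: 2; (-6); 0; 0; 6; 6; (-4); 4; (-8); 8];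
[:: 6; 0; 0; 0; 6; 0; 2; (-6); (-16); 4];
[:: (-2); 0; 0; 0; 0; (-6); 8; (-4); (-4); 40];
[:: 0; 0; 0; 6; (-6); (-6); (-4); 0; 8; 16];
[:: (-2); 0; (-6); 0; (-6); 0; 0; (-4); 8; 40];
[:: 2; 0; 6; 0; 0; (-6); (-2); (-2); 4; 44];
[:: 0; 0; 0; 6; 6; 6; 0; 12; 0; (-24)];
[:: 2; 0; 0; 0; 0; 6; 0; 28; 4; 8];
[:: (-2); (-6); 0; 0; 6; 6; 4; (-4); 8; (-8)];
[:: (-2); 0; 0; (-6); 6; 0; 4; 20; 4; 8];
[:: 2; 0; 0; 0; 6; 0; 2; 10; 16; (-28)];
[:: 2; 0; 6; 0; 6; 0; 0; 4; (-8); (-40)];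
[:: (-4); 0; 6; 0; 0; 0; 6; (-14); (-8); (-28)];
[:: 6; 0; 6; 0; 0; 6; (-2); 6; (-4); 28];
[:: 2; 0; (-6); 0; 0; (-6); (-6); (-14); 4; 20];
[:: 4; 0; 0; 0; 0; 0; 0; (-16); 16; 32];
[:: (-6); 0; 0; 0; 6; 0; 2; (-6); (-16); 4];
[:: (-2); (-6); (-6); (-6); 0; 0; (-2); 14; 0; 12];
[:: 2; 0; 0; 6; 0; 6; (-2); (-14); 0; 36];
[:: (-2); (-6); 6; 6; 0; 0; (-2); (-10); (-8); (-4)];
[:: 4; 0; 0; 0; 0; 0; 8; 8; 0; (-48)];
[:: 6; 0; 0; 0; 6; 0; (-6); 18; 0; (-12)];
[:: 0; 6; (-6); 0; 0; 6; 0; 12; (-8); 8];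
[:: 2; 0; (-6); 6; 6; 0; (-6); (-2); 4; (-4)];
[:: (-4); (-6); 6; 0; 6; 0; 2; 10; (-4); 4];
[:: 0; (-6); 0; 6; (-6); 0; 6; (-6); 0; (-12)];
[:: 0; 0; 0; (-6); (-6); (-6); 0; (-12); 0; 24];
[:: (-4); (-6); (-6); 0; 6; 0; (-2); (-2); (-4); (-20)];
[:: 4; 0; 0; 0; 6; (-6); (-6); (-10); (-4); (-20)];
[:: (-6); 0; 6; 0; (-6); 0; (-4); 0; (-8); (-16)];
[:: 4; 0; 0; (-6); 0; 0; 10; 2; 4; 20];
[:: 2; 0; (-6); 0; 6; 0; 4; 16; (-8); (-16)];
[:: (-6); 0; (-6); 0; 0; 6; (-6); (-6); (-4); 4];
[:: 0; 0; 0; 0; 6; 6; 2; 6; 4; 44];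
[:: (-2); 6; 0; 6; 0; 0; 4; 8; 8; (-32)];
[:: (-2); 0; 6; 0; (-6); 0; (-4); (-16); 8; 16];
[:: 2; 0; 6; (-6); 0; (-6); 0; (-8); (-8); (-16)];
[:: 2; 6; 0; 0; 0; 0; (-2); 10; (-4); 52];
[:: (-2); 0; 6; (-6); 0; 6; 0; (-16); 0; 0];
[:: 0; 6; 6; 0; 6; 0; 6; 6; 4; (-4)];
[:: (-2); 0; 0; (-6); 0; (-6); 2; 14; 0; (-36)];
[:: (-2); 0; (-6); 0; 0; (-6); (-6); 2; (-12); (-12)];
[:: 2; 0; 0; 0; (-6); 0; (-2); 22; 0; (-36)];
[:: (-2); 0; 0; 6; 0; 6; (-2); 2; (-16); 4];
[:: 0; (-6); (-6); 0; 0; (-6); 4; 0; 8; 16];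
[:: 2; (-6); (-6); 0; 0; 0; (-4); 4; 12; (-24)];
[:: 4; 0; 6; 0; 0; 0; (-2); (-22); (-8); 20];
[:: (-2); (-6); 0; 0; 0; 0; 2; (-10); 4; (-52)];
[:: (-2); 6; 0; 0; 6; (-6); 0; 8; (-8); (-16)];
[:: 4; 0; (-6); 6; 0; 0; 0; (-4); (-12); (-24)];
[:: 2; 0; 0; 6; 0; (-6); 6; (-14); 8; 4];
[:: (-6); 0; 0; 0; (-6); 0; (-2); 6; 16; (-4)];
[:: (-2); 6; 0; 0; (-6); 6; (-4); (-4); 0; 24];
[:: 2; (-6); 0; 0; 0; 0; 2; 22; (-12); 12];
[:: 2; (-6); 0; 0; 6; (-6); 4; 4; 0; (-24)];
[:: 0; (-6); 0; 0; 0; (-6); 2; (-6); (-16); 4];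
[:: (-2); 0; 6; 0; 0; 6; 6; 14; (-4); (-20)];
[:: 2; (-6); 0; (-6); 0; 0; (-4); (-8); (-8); 32];
[:: 6; 0; 6; 0; (-6); 0; (-4); 0; (-8); (-16)];
[:: 4; 6; 0; 0; 0; (-6); (-2); 14; 8; (-20)];
[:: (-2); 0; (-6); 0; 0; 6; 2; 2; (-4); (-44)];
[:: 0; 6; 0; 0; 0; 6; 6; (-18); 0; 12];
[:: (-4); 0; 0; 0; 0; 0; 8; (-8); 16; (-16)];
[:: 2; 6; 0; 6; 0; 0; (-4); 16; (-8); (-16)];
[:: (-4); 0; (-6); 0; 0; 0; 10; (-2); (-8); (-4)];
[:: 2; (-6); 6; 0; 0; 0; 8; (-8); (-4); 16];
[:: (-4); 0; 0; 0; (-6); 6; (-2); (-14); 4; (-28)];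
[:: 6; (-6); 0; 0; (-6); (-6); 0; 0; 0; 0];
[:: (-6); 0; 0; 6; 0; (-6); (-2); (-6); (-8); 20];
[:: 12; 0; 0; 0; 0; 0; 0; 0; 0; 0];
[:: (-4); 6; (-6); 0; 0; (-6); 0; 4; 0; 24];
[:: 2; 6; (-6); (-6); 0; 0; 2; 10; 8; 4];
[:: (-2); (-6); 0; (-6); 0; 0; 4; (-16); 8; 16];
[:: (-2); 6; 6; 0; 0; 0; (-4); 20; 4; 8];
[:: 6; 0; 0; 0; (-6); 0; 6; (-18); 0; 12];
[:: 4; 0; 0; 0; 6; (-6); 2; 14; (-4); 28];
[:: 2; 0; (-6); (-6); 0; (-6); 4; 4; (-8); 8];
[:: (-2); 0; 0; 6; 6; 0; 0; (-16); (-4); (-32)];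
[:: (-2); 6; 0; 0; (-6); (-6); 4; (-4); 8; (-8)];
[:: (-2); 6; 6; 0; 0; 0; 4; (-4); (-12); 24];
[:: 2; 0; 6; (-6); 6; 0; 2; (-2); (-4); 28];
[:: 0; 6; 6; 0; 0; 6; (-4); 0; (-8); (-16)];
[:: 2; 6; 0; 0; (-6); 6; 4; 4; 0; (-24)];
[:: (-4); 0; 0; 0; 0; 0; 0; 16; (-16); (-32)];
[:: (-6); (-6); 0; (-6); 0; 0; 4; 0; (-8); (-16)];
[:: 2; (-6); 0; 0; 0; 0; (-6); (-2); (-12); (-36)];
[:: 2; 0; 0; 0; 6; 0; 10; (-14); 0; (-12)];
[:: 2; (-6); 6; 0; 0; 0; 0; 16; 12; 0];
[:: 4; (-6); 0; 6; 6; 0; 2; (-10); 0; 12];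
[:: 6; 0; 6; 0; 6; 0; 0; (-12); 8; (-8)];
[:: (-2); 0; 0; 0; 6; 0; (-6); 2; 16; 20];
[:: (-2); (-6); 0; 0; 0; 0; 10; 14; 4; (-4)];
[:: (-2); (-6); 0; 0; (-6); 6; 0; 8; (-8); (-16)];
[:: 2; 0; 0; 6; (-6); 0; 4; 4; (-4); 40];
[:: 6; 6; 0; (-6); 0; 0; 0; (-12); 0; 24];
[:: 6; (-6); 0; (-6); 0; 0; 4; 0; (-8); (-16)];
[:: 2; 0; (-6); 0; (-6); 0; 8; 4; 8; (-8)];
[:: (-6); 0; 0; 6; 0; 6; 6; (-6); 0; (-12)];
[:: 4; 0; 0; 6; (-6); 6; (-4); 8; 0; 0];
[:: 2; 0; 6; 0; 0; 6; 6; (-2); 12; 12];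
[:: (-2); 0; 0; 0; (-6); 0; (-10); 14; 0; 12];
[:: 2; (-6); 0; 0; (-6); 6; 0; (-8); 8; 16];
[:: 0; (-6); (-6); 0; (-6); 0; (-6); (-6); (-4); 4];
[:: (-2); 0; (-6); 0; 6; 0; (-4); 8; (-8); 32];
[:: 4; 0; 0; 6; 0; 0; 6; 14; 12; 12];
[:: 6; 0; 6; 0; 0; (-6); 6; 6; 4; (-4)];
[:: 4; 0; 6; (-6); 0; 0; 0; 20; (-4); (-8)];
[:: (-6); 6; 0; 6; 0; 0; (-4); 0; 8; 16];
[:: (-4); 0; 0; (-6); 0; 0; 2; 10; (-12); 36];
[:: 4; 0; 6; 6; 0; 0; 4; 8; (-12); 0];
[:: 4; 0; 0; 0; 0; 0; (-8); 8; (-16); 16];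
[:: 6; 0; 0; 6; 0; 6; 6; (-6); 0; (-12)];
[:: (-2); 0; (-6); 6; (-6); 0; (-2); 2; 4; (-28)];
[:: (-2); 0; 0; 6; 0; (-6); 6; 2; (-8); (-28)];
[:: 6; 0; 0; (-6); 0; (-6); (-6); 6; 0; 12];
[:: (-4); 0; (-6); 0; 0; 0; 2; 22; 8; (-20)];
[:: 2; 0; (-6); 0; 0; 6; 2; (-14); 12; (-12)];
[:: (-4); (-6); 0; 0; 0; 6; 2; (-14); (-8); 20];
[:: (-4); 0; (-6); (-6); 0; 0; (-4); (-8); 12; 0];
[:: (-6); 0; 0; (-6); 0; (-6); (-6); 6; 0; 12];
[:: (-2); 6; (-6); 0; 0; 0; (-8); 8; 4; (-16)];
[:: (-2); 0; 0; 6; 6; 0; 8; 8; (-4); 16];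
[:: (-6); (-6); 0; 0; (-6); (-6); 0; 0; 0; 0];
[:: 2; 6; 0; 0; 6; (-6); 0; (-8); 8; 16];
[:: 4; 6; 0; 0; 0; (-6); 6; (-10); (-8); (-4)];
[:: (-6); 6; 0; 0; 0; 0; 6; 18; (-4); 4];
[:: 2; 0; 0; 0; (-6); 0; 6; (-2); (-16); (-20)];
[:: (-6); 0; (-6); 0; 0; (-6); 2; (-6); 4; (-28)]].

Definition allowedZ : seq Z := [:: 0; 768; -768; 1152; -1152; 1536; -1536; 2304; -2304; -4608].
Definition okZ (z : Z) : bool := has (Z.eqb z) allowedZ.
Definition dotI (a b : seq Z) : Z :=
  foldr (fun k acc => nth 0 a k * nth 0 b k * nth 0 ew k + acc) 0 (iota 0 10).
Fixpoint pairs_ok (l : seq (seq Z)) : bool :=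
  match l with
  | x :: l' => all (fun y => okZ (dotI x y)) l' && pairs_ok l'
  | [::] => true
  end.
Definition diag_ok : bool := all (fun a => Z.eqb (dotI a a) 4608) data.

Lemma pairs_ok_data : pairs_ok data = true.
Proof. vm_compute. reflexivity. Qed.
Lemma diag_ok_data : diag_ok = true.
Proof. vm_compute. reflexivity. Qed.
Lemma size_data : size data = 510%N.
Proof. vm_compute. reflexivity. Qed.
Lemma ew_nonneg : all (fun z => Z.leb 0 z) ew = true.
Proof. vm_compute. reflexivity. Qed.

Local Open Scope ring_scope.

Definition fZ (R : realType) (z : Z) : R := (int_of_Z z)%:~R.

Lemma fZD (R : realType) (a b : Z) : fZ R (a + b)%Z = fZ R a + fZ R b.
Proof. by rewrite /fZ -intrD; congr (_%:~R); exact: (raddfD int_of_Z a b). Qed.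

Lemma fZM (R : realType) (a b : Z) : fZ R (a * b)%Z = fZ R a * fZ R b.
Proof. by rewrite /fZ -intrM; congr (_%:~R); exact: (rmorphM int_of_Z a b). Qed.

Lemma fZ_pos (R : realType) p : fZ R (Zpos p) = (Pos.to_nat p)%:R.
Proof. by []. Qed.

Lemma fZ_neg (R : realType) p : fZ R (Zneg p) = - (Pos.to_nat p)%:R.
Proof.
rewrite /fZ /= NegzE; have -> : ((Pos.to_nat p).-1.+1 = Pos.to_nat p)%N.
  by have := Pos2Nat.is_pos p; case: (Pos.to_nat p) => // /ssrnat.ltP.
by rewrite mulrNz.
Qed.

Lemma fZ_ge0 (R : realType) z : Z.leb 0 z -> 0 <= fZ R z.
Proof. by case: z => // p _; rewrite fZ_pos ler0n. Qed.

Lemma fZ_foldr (R : realType) (G : nat -> Z) s :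
  fZ R (foldr (fun k acc => (G k + acc)%Z) 0%Z s) = \sum_(k <- s) fZ R (G k).
Proof.
elim: s => [|k s IH] /=; first by rewrite big_nil.
by rewrite big_cons fZD IH.
Qed.

Definition vec (R : realType) (i : nat) : 'rV[R]_10 :=
  \row_k (fZ R (nth 0%Z (nth [::] data i) k) / 12%:R
           * Num.sqrt (fZ R (nth 0%Z ew k) / 32%:R)).

Lemma ew_ge0 (R : realType) k : 0 <= fZ R (nth 0%Z ew k).
Proof.
apply: fZ_ge0; case: (ltnP k (size ew)) => h.
  exact: (all_nthP 0%Z (ew_nonneg) k h).
by rewrite nth_default.
Qed.

Lemma dot_vec (R : realType) i j :
  dotp (vec R i) (vec R j) = fZ R (dotI (nth [::] data i) (nth [::] data j)) / 4608%:R.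
Proof.
rewrite /dotp /dotI fZ_foldr mulr_suml.
have E : forall k : nat,
   (fZ R (nth 0%Z (nth [::] data i) k) / 12%:R * Num.sqrt (fZ R (nth 0%Z ew k) / 32%:R)) *
   (fZ R (nth 0%Z (nth [::] data j) k) / 12%:R * Num.sqrt (fZ R (nth 0%Z ew k) / 32%:R))
   = fZ R (nth 0%Z (nth [::] data i) k * nth 0%Z (nth [::] data j) k * nth 0%Z ew k) / 4608%:R.
  move=> k; rewrite !fZM.
  set s := Num.sqrt (fZ R (nth 0%Z ew k) / 32%:R).
  have Hs : s * s = fZ R (nth 0%Z ew k) / 32%:R.
    by rewrite -expr2 sqr_sqrtr // divr_ge0 // ?ew_ge0 ?ler0n.
  rewrite -[LHS]/(_ * _ * _ * (_ * _ * _)).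
  have -> : forall a b c d e f : R, a * b * c * (d * e * f) = a * d * (b * e) * (c * f)
    by move=> *; ring.
  by rewrite Hs; field.

under eq_bigr => k _ do rewrite !mxE E.
rewrite -(big_mkord xpredT (fun k => fZ R (nth 0%Z (nth [::] data i) k * nth 0%Z (nth [::] data j) k * nth 0%Z ew k) / 4608%:R)).
by [].
Qed.

Lemma fZ_lit (R : realType) p n : Pos.to_nat p = n -> fZ R (Zpos p) = n%:R.
Proof. by move=> <-. Qed.

Lemma okZP (R : realType) z : okZ z = true -> fZ R z / 4608%:R \in allowed_ips R.
Proof.
rewrite /okZ /allowedZ /allowed_ips /= => H.
  case/orP: H => [/Z.eqb_eq -> | H].
    by rewrite /fZ /= mul0r !inE eqxx.
  case/orP: H => [/Z.eqb_eq -> | H].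
    by rewrite (@fZ_lit R _ 768) // (_ : (768%:R / 4608%:R : R) = 1/6); [rewrite !inE eqxx ?orbT | field].
  case/orP: H => [/Z.eqb_eq -> | H].
    by rewrite fZ_neg (_ : Pos.to_nat _ = 768%nat) // (_ : (- 768%:R / 4608%:R : R) = -(1/6)); [rewrite !inE eqxx ?orbT | field].
  case/orP: H => [/Z.eqb_eq -> | H].
    by rewrite (@fZ_lit R _ 1152) // (_ : (1152%:R / 4608%:R : R) = 1/4); [rewrite !inE eqxx ?orbT | field].
  case/orP: H => [/Z.eqb_eq -> | H].
    by rewrite fZ_neg (_ : Pos.to_nat _ = 1152%nat) // (_ : (- 1152%:R / 4608%:R : R) = -(1/4)); [rewrite !inE eqxx ?orbT | field].
  case/orP: H => [/Z.eqb_eq -> | H].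
    by rewrite (@fZ_lit R _ 1536) // (_ : (1536%:R / 4608%:R : R) = 1/3); [rewrite !inE eqxx ?orbT | field].
  case/orP: H => [/Z.eqb_eq -> | H].
    by rewrite fZ_neg (_ : Pos.to_nat _ = 1536%nat) // (_ : (- 1536%:R / 4608%:R : R) = -(1/3)); [rewrite !inE eqxx ?orbT | field].
  case/orP: H => [/Z.eqb_eq -> | H].
    by rewrite (@fZ_lit R _ 2304) // (_ : (2304%:R / 4608%:R : R) = 1/2); [rewrite !inE eqxx ?orbT | field].
  case/orP: H => [/Z.eqb_eq -> | H].
    by rewrite fZ_neg (_ : Pos.to_nat _ = 2304%nat) // (_ : (- 2304%:R / 4608%:R : R) = -(1/2)); [rewrite !inE eqxx ?orbT | field].
  case/orP: H => [/Z.eqb_eq -> | H].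
    by rewrite fZ_neg (_ : Pos.to_nat _ = 4608%nat) // (_ : (- 4608%:R / 4608%:R : R) = -1); [rewrite !inE eqxx ?orbT | field].
  by [].
Qed.

Lemma pairs_okP l : pairs_ok l = true -> forall i j, (i < j)%nat -> (j < size l)%nat ->
  okZ (dotI (nth [::] l i) (nth [::] l j)) = true.
Proof.
elim: l => [|x l IH] //= /andP [Ha Hp] [|i] [|j] //= hij hj.
  exact: (all_nthP [::] Ha j hj).
exact: IH.
Qed.

Lemma dotpC (R : realType) n (u v : 'rV[R]_n) : dotp u v = dotp v u.
Proof. by rewrite /dotp; apply: eq_bigr => k _; rewrite mulrC. Qed.

Lemma allowed_le (R : realType) (x : R) : x \in allowed_ips R -> x <= 1/2.
Proof.
rewrite /allowed_ips !inE => H.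
repeat (case/orP: H => [/eqP -> | H]; first by lra).
by move/eqP: H => ->; lra.
Qed.

Theorem mainTheorem6 (R : realType) :
  (exists v : 'I_510 -> 'rV[R]_10,
      injective v /\
      (forall i, dotp (v i) (v i) = 1) /\
      (forall i j, i != j -> dotp (v i) (v j) \in allowed_ips R))
  /\ kissing_number_ge R 10 510.
Proof.
have Hsz : forall i : 'I_510, (i < size data)%nat by move=> i; rewrite size_data.
have Hdiag : forall i : 'I_510, dotp (vec R i) (vec R i) = 1.
  move=> i; rewrite dot_vec.
  move: (all_nthP [::] diag_ok_data i (Hsz i)) => /Z.eqb_eq ->.
  by rewrite (@fZ_lit R _ 4608) // divff // pnatr_eq0.
have Hoff : forall i j : 'I_510, i != j -> dotp (vec R i) (vec R j) \in allowed_ips R.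
  move=> i j; rewrite neq_ltn => /orP [] h.
    rewrite dot_vec; apply: okZP; exact: (@pairs_okP data pairs_ok_data _ _ h (Hsz j)).
  by rewrite dotpC dot_vec; apply: okZP; exact: (@pairs_okP data pairs_ok_data _ _ h (Hsz i)).
split.
  exists (fun i => vec R i); split; last by split.
  move=> i j E; apply/eqP; apply: contraT => hij.
  have := Hoff i j hij; rewrite E Hdiag => /allowed_le; lra.
exists (fun i => vec R i); split=> // i j hij.
exact: allowed_le (Hoff i j hij).
Qed.
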